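(* Let $d\ge1$, let $0\le\theta\le1$, and consider instances encoded as bipolar vectors $(x_1,\dots,x_d)\in\{1,-1\}^d$. Let a finite nonempty set of $k$ rules be given, each rule having as premise a nonempty conjunction of literals $x_i$ or $\neg x_i$ ($1\le i\le d$) and as conclusion the target class with a rule certainty factor $c\in(\theta,1]$. (An instance matches a rule if $x_i=1$ for each positive literal $x_i$ in its premise and $x_i=-1$ for each negated literal $\neg x_i$ in its premise.) Then there exists a multi-channel model with $k$ channels such that for every instance, the model output $M_{out}$ is $>\theta$ if the instance matches at least one of the given rules, and $M_{out}=0$ otherwise.
   Context: The CF-combining function: for a finite list of real arguments in $[-1,1]$, split them into the nonnegative ones $a_1,a_2,\dots$ and the negative ones $b_1,b_2,\dots$, and set $f_{\rm cf}=f^+_{\rm cf}(a_1,a_2,\dots)+f^-_{\rm cf}(b_1,b_2,\dots)$ where $f^+_{\rm cf}(a_1,a_2,\dots)=1-\prod_i(1-a_i)$ and $f^-_{\rm cf}(b_1,b_2,\dots)=-1+\prod_j(1+b_j)$ (empty products equal $1$). A multi-channel model with $k$ channels has, for each channel $j=1,\dots,k$, an output weight $u_j\in[0,1]$, a bias $w_{j0}\in[-1,1]$ and input weights $w_{j1},\dots,w_{jd}\in[-1,1]$. On input $(x_1,\dots,x_d)$, channel $j$ has activation $\phi_j=f_{\rm cf}(w_{j0},w_{j1}x_1,\dots,w_{jd}x_d)$ and influence $\psi_j=u_j\phi_j$, and the model output is $M_{out}=f_{\rm cf}(\psi_1,\dots,\psi_k)$. *)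

(* Defs.v *)
From Stdlib Require Import Reals List.
Import ListNotations.
Open Scope R_scope.

Definition prodR (l : list R) : R := fold_right Rmult 1 l.

Definition is_nonneg (a : R) : bool := if Rle_dec 0 a then true else false.

Definition fcf_pos (l : list R) : R := 1 - prodR (map (fun a => 1 - a) l).
Definition fcf_neg (l : list R) : R := -1 + prodR (map (fun b => 1 + b) l).

Definition fcf (l : list R) : R :=
  fcf_pos (filter is_nonneg l) + fcf_neg (filter (fun a => negb (is_nonneg a)) l).

(* A multi-channel model with channels j = 0..k-1 and inputs i = 0..d-1
   (the paper's 1-based indices shifted by one). *)
Record model := Model {
  u  : nat -> R;
  w0 : nat -> R;
  w  : nat -> nat -> R
}.

Definition valid_model (k d : nat) (m : model) : Prop :=
  forall j, (j < k)%nat ->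
    (0 <= u m j <= 1) /\ (-1 <= w0 m j <= 1) /\
    (forall i, (i < d)%nat -> -1 <= w m j i <= 1).

Definition activation (d : nat) (m : model) (j : nat) (x : nat -> R) : R :=
  fcf (w0 m j :: map (fun i => w m j i * x i) (seq 0 d)).

Definition influence (d : nat) (m : model) (j : nat) (x : nat -> R) : R :=
  u m j * activation d m j x.

Definition M_out (k d : nat) (m : model) (x : nat -> R) : R :=
  fcf (map (fun j => influence d m j x) (seq 0 k)).

(* bipolar instance (x_0,...,x_{d-1}) in {1,-1}^d; values beyond d are irrelevant *)
Definition bipolar (d : nat) (x : nat -> R) : Prop :=
  forall i, (i < d)%nat -> x i = 1 \/ x i = -1.

(* A literal (i, true) stands for x_i, (i, false) for the negation of x_i. *)
Definition literal := (nat * bool)%type.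

Record rule := Rule {
  premise : list literal;
  cf : R                    (* certainty factor of the conclusion (target class) *)
}.

Definition lit_holds (x : nat -> R) (l : literal) : Prop :=
  x (fst l) = (if snd l then 1 else -1).

Definition matches (x : nat -> R) (r : rule) : Prop :=
  Forall (lit_holds x) (premise r).

Definition well_formed_rule (d : nat) (theta : R) (r : rule) : Prop :=
  premise r <> [] /\
  Forall (fun l : literal => (fst l < d)%nat) (premise r) /\
  theta < cf r <= 1.

(* Main.v *)
Require Import Defs.
From Stdlib Require Import Reals List Lra Classical Bool Arith Lia.
Import ListNotations.
Open Scope R_scope.

Definition dflt := Rule [] 0.
Definition cntr (p : list literal) : bool :=
  existsb (fun l => existsb (fun l' => Nat.eqb (fst l) (fst l') && xorb (snd l) (snd l')) p) p.
Definition hasl (p : list literal) (i : nat) (b : bool) : bool :=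
  existsb (fun l => Nat.eqb (fst l) i && Bool.eqb (snd l) b) p.
Definition wt p i : R := if hasl p i true then 1 else if hasl p i false then -1 else 0.
Definition mdl (rules : list rule) : model :=
  Model (fun j => if cntr (premise (nth j rules dflt)) then 0 else cf (nth j rules dflt))
        (fun _ => 1) (fun j i => wt (premise (nth j rules dflt)) i).

Lemma hasl_spec p i b : hasl p i b = true <-> In (i, b) p.
Proof.
  unfold hasl; rewrite existsb_exists; split.
  - intros [[i' b'] [H H']]. apply andb_prop in H' as [H1 H2].
    apply Nat.eqb_eq in H1. apply Bool.eqb_prop in H2. simpl in *; subst; auto.
  - intros H; exists (i, b); split; auto. simpl. rewrite Nat.eqb_refl, Bool.eqb_reflx. auto.
Qed.

Lemma cntr_spec p i : In (i, true) p -> In (i, false) p -> cntr p = true.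
Proof.
  intros H1 H2. unfold cntr. apply existsb_exists. exists (i, true); split; auto.
  apply existsb_exists. exists (i, false); split; auto. simpl. rewrite Nat.eqb_refl. auto.
Qed.

Lemma negpart L : (forall t, In t L -> t = -1 \/ 0 <= t) ->
  (In (-1) L -> prodR (map (fun b => 1 + b) (filter (fun a => negb (is_nonneg a)) L)) = 0) /\
  (~ In (-1) L -> prodR (map (fun b => 1 + b) (filter (fun a => negb (is_nonneg a)) L)) = 1).
Proof.
  induction L as [|a L IH]; intros H.
  - simpl. split; [intros []| reflexivity].
  - assert (IH' := IH (fun t Ht => H t (or_intror Ht))).
    destruct IH' as [IH1 IH2].
    simpl. destruct (Rle_dec 0 a) as [Ha|Ha];
    [assert (Ei : is_nonneg a = true) | assert (Ei : is_nonneg a = false)];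
    try (unfold is_nonneg; destruct (Rle_dec 0 a); tauto); rewrite Ei; simpl.
    + split.
      * intros [E|E]; [lra| auto].
      * intros Hn; apply IH2; auto.
    + assert (a = -1) by (destruct (H a (or_introl eq_refl)); lra).
      split.
      * intros _. unfold prodR; simpl. subst a. ring.
      * intros Hn; exfalso; apply Hn; auto.
Qed.

Lemma fcf_one L : (forall t, In t L -> t = -1 \/ 0 <= t) ->
  (In (-1) L -> fcf (1 :: L) = 0) /\ (~ In (-1) L -> fcf (1 :: L) = 1).
Proof.
  intros H. destruct (negpart L H) as [N1 N2].
  assert (Ei : is_nonneg 1 = true) by (unfold is_nonneg; destruct (Rle_dec 0 1); [auto|lra]).
  unfold fcf. simpl filter. rewrite Ei. simpl.
  unfold fcf_neg, fcf_pos. unfold prodR at 1. simpl.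
  split; intros Hi; [rewrite (N1 Hi)| rewrite (N2 Hi)]; ring.
Qed.

Lemma prod_bounds l : (forall a, In a l -> 0 <= a <= 1) ->
  (0 <= prodR (map (fun a => 1 - a) l) <= 1) /\
  (forall a, In a l -> prodR (map (fun a => 1 - a) l) <= 1 - a).
Proof.
  induction l as [|a l IH]; intros H.
  - unfold prodR; simpl. split; [lra| intros _ []].
  - assert (IH' := IH (fun t Ht => H t (or_intror Ht))). destruct IH' as [[P1 P2] P3].
    assert (Ha := H a (or_introl eq_refl)).
    unfold prodR in *; simpl. split; [split; nra|].
    intros b [E|E].
    + subst b. nra.
    + specialize (P3 b E). specialize (H b (or_intror E)). nra.
Qed.

Lemma prod_zero l : (forall a, In a l -> a = 0) -> prodR (map (fun a => 1 - a) l) = 1.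
Proof.
  induction l as [|a l IH]; intros H.
  - reflexivity.
  - unfold prodR in *; simpl. rewrite (H a (or_introl eq_refl)).
    rewrite IH by (intros b Hb; apply H; right; exact Hb). ring.
Qed.

Lemma filt_nonneg l : (forall a, In a l -> 0 <= a) ->
  filter is_nonneg l = l /\ filter (fun a => negb (is_nonneg a)) l = [].
Proof.
  induction l as [|a l IH]; intros H; simpl; auto.
  destruct (IH (fun t Ht => H t (or_intror Ht))) as [E1 E2].
  assert (Ei : is_nonneg a = true) by (unfold is_nonneg; destruct (Rle_dec 0 a); [auto|exfalso; apply n; apply H; left; reflexivity]).
  rewrite Ei; simpl. rewrite E1, E2; auto.
Qed.

Lemma fcf_pos_list l : (forall a, In a l -> 0 <= a) ->
  fcf l = 1 - prodR (map (fun a => 1 - a) l).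
Proof.
  intros H. destruct (filt_nonneg l H) as [E1 E2]. unfold fcf. rewrite E1, E2.
  unfold fcf_pos, fcf_neg. unfold prodR at 2. simpl. ring.
Qed.

Lemma channel d theta rules x j :
  0 <= theta ->
  (forall r, In r rules -> well_formed_rule d theta r) ->
  bipolar d x -> (j < length rules)%nat ->
  (0 <= influence d (mdl rules) j x <= 1) /\
  (matches x (nth j rules dflt) -> influence d (mdl rules) j x = cf (nth j rules dflt)) /\
  (~ matches x (nth j rules dflt) -> influence d (mdl rules) j x = 0).
Proof.
  intros Ht Hwf Hx Hj.
  assert (Hin : In (nth j rules dflt) rules) by (apply nth_In; auto).
  destruct (Hwf _ Hin) as [Hne [Hidx Hcf]].
  set (r := nth j rules dflt) in *. set (p := premise r) in *.
  set (L := map (fun i => wt p i * x i) (seq 0 d)).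
  assert (Hact : activation d (mdl rules) j x = fcf (1 :: L)) by reflexivity.
  assert (Hu : u (mdl rules) j = if cntr p then 0 else cf r) by reflexivity.
  assert (HL : forall t, In t L -> t = -1 \/ 0 <= t).
  { intros t Htt. unfold L in Htt. apply in_map_iff in Htt as [i [Ei Hi]].
    apply in_seq in Hi. destruct (Hx i ltac:(lia)) as [X|X]; rewrite <- Ei, X;
    unfold wt; destruct (hasl p i true); [|destruct (hasl p i false)| |destruct (hasl p i false)]; lra. }
  destruct (fcf_one L HL) as [F1 F2].
  assert (Hact01 : activation d (mdl rules) j x = 0 \/ activation d (mdl rules) j x = 1).
  { rewrite Hact. destruct (classic (In (-1) L)); [left; auto | right; auto]. }
  unfold influence. rewrite Hu.
  split; [|split].
  - destruct (cntr p); destruct Hact01 as [A|A]; rewrite A; lra.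
  - intros Hm.
    assert (Hc : cntr p = false).
    { destruct (cntr p) eqn:E; auto. exfalso.
      unfold cntr in E. apply existsb_exists in E as [l [Hl E]].
      apply existsb_exists in E as [l' [Hl' E]].
      apply andb_prop in E as [E1 E2]. apply Nat.eqb_eq in E1.
      unfold matches in Hm. rewrite Forall_forall in Hm.
      assert (A1 := Hm l Hl). assert (A2 := Hm l' Hl'). unfold lit_holds in *.
      rewrite E1 in A1. rewrite A1 in A2.
      destruct (snd l), (snd l'); simpl in E2; try discriminate; lra. }
    rewrite Hc. rewrite Hact, F2; [ring|].
    intros Hi. unfold L in Hi. apply in_map_iff in Hi as [i [Ei _]].
    unfold matches in Hm. rewrite Forall_forall in Hm.
    unfold wt in Ei. destruct (hasl p i true) eqn:E1.
    + apply hasl_spec in E1. specialize (Hm _ E1). unfold lit_holds in Hm; simpl in Hm.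
      rewrite Hm in Ei. lra.
    + destruct (hasl p i false) eqn:E2.
      * apply hasl_spec in E2. specialize (Hm _ E2). unfold lit_holds in Hm; simpl in Hm.
        rewrite Hm in Ei. lra.
      * lra.
  - intros Hm. destruct (cntr p) eqn:Hc; [ring|].
    assert (Hex : exists l, In l p /\ ~ lit_holds x l).
    { apply NNPP; intro Hn; apply Hm. unfold matches. apply Forall_forall.
      intros l Hl. apply NNPP; intro; apply Hn; eauto. }
    destruct Hex as [[i b] [Hl Hnl]].
    rewrite Forall_forall in Hidx. assert (Hid := Hidx _ Hl). simpl in Hid.
    rewrite Hact, F1; [ring|].
    unfold L. apply in_map_iff. exists i. split; [|apply in_seq; lia].
    unfold lit_holds in Hnl; simpl in Hnl.
    destruct (Hx i Hid) as [X|X]; unfold wt.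
    + destruct b; [exfalso; auto|].
      destruct (hasl p i true) eqn:E1.
      * apply hasl_spec in E1. rewrite (cntr_spec p i E1 Hl) in Hc; discriminate.
      * assert (E2 : hasl p i false = true) by (apply hasl_spec; auto).
        rewrite E2, X. ring.
    + destruct b; [|exfalso; auto].
      assert (E2 : hasl p i true = true) by (apply hasl_spec; auto).
      rewrite E2, X. ring.
Qed.

Theorem theorem2 (d : nat) (theta : R) (rules : list rule) :
  (1 <= d)%nat ->
  0 <= theta <= 1 ->
  rules <> [] ->
  (forall r, In r rules -> well_formed_rule d theta r) ->
  exists m : model,
    valid_model (length rules) d m /\
    forall x : nat -> R, bipolar d x ->
      ((exists r, In r rules /\ matches x r) -> M_out (length rules) d m x > theta) /\
      (~ (exists r, In r rules /\ matches x r) -> M_out (length rules) d m x = 0).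
Proof.
  intros Hd Ht Hne Hwf. exists (mdl rules). split.
  - intros j Hj.
    assert (Hin : In (nth j rules dflt) rules) by (apply nth_In; auto).
    destruct (Hwf _ Hin) as [_ [_ Hcf]].
    simpl. split; [|split; [lra|]].
    + destruct (cntr (premise (nth j rules dflt))); lra.
    + intros i _. unfold wt. destruct (hasl _ i true); [|destruct (hasl _ i false)]; lra.
  - intros x Hx.
    set (ps := map (fun j => influence d (mdl rules) j x) (seq 0 (length rules))).
    assert (Hps : forall a, In a ps -> 0 <= a <= 1).
    { intros a Ha. unfold ps in Ha. apply in_map_iff in Ha as [j [Ej Hj]].
      apply in_seq in Hj. subst a.
      destruct (channel d theta rules x j ltac:(lra) Hwf Hx ltac:(lia)) as [A _]; auto. }
    assert (HM : M_out (length rules) d (mdl rules) x = 1 - prodR (map (fun a => 1 - a) ps)).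
    { apply fcf_pos_list. intros a Ha; apply Hps; auto. }
    rewrite HM. destruct (prod_bounds ps Hps) as [_ PB].
    split.
    + intros [r [Hr Hm]]. destruct (In_nth rules r dflt Hr) as [j [Hj Ej]].
      destruct (channel d theta rules x j ltac:(lra) Hwf Hx Hj) as [_ [B _]].
      rewrite Ej in B. specialize (B Hm).
      destruct (Hwf r Hr) as [_ [_ Hcf]].
      assert (Hin : In (cf r) ps).
      { unfold ps. apply in_map_iff. exists j. split; [exact B|].
        apply in_seq; lia. }
      specialize (PB _ Hin). lra.
    + intros Hn. rewrite prod_zero; [ring|].
      intros a Ha. unfold ps in Ha. apply in_map_iff in Ha as [j [Ej Hj]].
      apply in_seq in Hj. subst a.
      destruct (channel d theta rules x j ltac:(lra) Hwf Hx ltac:(lia)) as [_ [_ C]].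
      apply C. intro Hm. apply Hn. exists (nth j rules dflt). split; auto.
      apply nth_In; lia.
Qed.
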